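(* Let $H\ge S\ge1$ and let $\{\boldsymbol{d}_{\theta s}\}$, $\theta=1,\ldots,H$, $s=1,\ldots,S$, be random variables that are jointly absolutely continuous with respect to Lebesgue measure on $\mathbb{R}_+^{H\times S}$; write $\boldsymbol{D}=[\boldsymbol{d}_{\theta s}]$. Let $k$ be a receiving agent with (deterministic) aggregate weight vector $x_k=[x_{1k},\ldots,x_{Sk}]^\top$ (entries strictly positive, summing to $1$). Let $\boldsymbol{\theta}^\star_k=\arg\min_{\theta\in\{1,\ldots,H\}}\sum_{s=1}^S x_{sk}\boldsymbol{d}_{\theta s}$, and when it is unique define $\boldsymbol{B}_k=(\mathbb{1}_He_{\boldsymbol{\theta}^\star_k}^\top-I_H)\boldsymbol{D}$ and $\boldsymbol{C}_k=\begin{bmatrix}\boldsymbol{B}_k\\ \mathbb{1}_S^\top\end{bmatrix}$. Then $$\mathbb{P}\big[\boldsymbol{\theta}^\star_k\text{ is unique and }\mathrm{rank}(\boldsymbol{C}_k)=S\big]=1.$$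
   Context: Setting: a weakly-connected network with $S$ sending sub-networks $\mathcal{N}_1,\ldots,\mathcal{N}_S$, in each of which all agents share the same true distribution $f^{(s)}$ and likelihoods $L^{(s)}(\theta)$, $\theta\in\{1,\ldots,H\}$; $\boldsymbol{d}_{\theta s}$ models the KL divergence $D[f^{(s)}\|L^{(s)}(\theta)]$. The combination matrix $A$ (nonnegative, left-stochastic) has block form $\begin{bmatrix}A_{\mathcal{S}}&A_{\mathcal{S}\mathcal{R}}\\0&A_{\mathcal{R}}\end{bmatrix}$ with $A_{\mathcal{S}}=\mathrm{blockdiag}\{A_{\mathcal{N}_s}\}$, each sending sub-network strongly connected with Perron vector $p^{(s)}$, each receiving sub-network connected and linked to at least one agent of every sending sub-network. With $E=\mathrm{blockdiag}\{p^{(s)}\mathbb{1}^\top_{N_s}\}$ and $\Omega=[\omega_{\ell k}]=EA_{\mathcal{S}\mathcal{R}}(I-A_{\mathcal{R}})^{-1}$, the aggregate weight is $x_{sk}=\sum_{\ell\in\mathcal{N}_s}\omega_{\ell k}$. $e_m$ is the $m$-th canonical basis vector of $\mathbb{R}^H$ and $\mathbb{1}_L$ the all-ones vector. *)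

(* Defs.v *)
From HB Require Import structures.
From mathcomp Require Import all_boot all_order all_algebra.
From mathcomp Require Import all_classical all_reals all_analysis.
Set Implicit Arguments. Unset Strict Implicit. Unset Printing Implicit Defensive.
Import Order.TTheory GRing.Theory Num.Theory.
Local Open Scope classical_set_scope.
Local Open Scope ring_scope.

Definition mx_box (R : realType) (H S : nat) (a b : 'M[R]_(H, S)) : set 'M[R]_(H, S) :=
  [set M | forall i j, a i j <= M i j /\ M i j <= b i j].

Definition mx_box_vol (R : realType) (H S : nat) (a b : 'M[R]_(H, S)) : R :=
  \prod_(i < H) \prod_(j < S) (b i j - a i j).

Definition lebesgue_null (R : realType) (H S : nat) (A : set 'M[R]_(H, S)) : Prop :=
  forall eps : R, 0 < eps ->
    exists a b : nat -> 'M[R]_(H, S),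
      (forall n i j, a n i j <= b n i j) /\
      A `<=` \bigcup_n mx_box (a n) (b n) /\
      (forall N, \sum_(n < N) mx_box_vol (a n) (b n) <= eps).

Definition agg_cost (R : realType) (H S : nat) (x : 'I_S -> R) (D : 'M[R]_(H, S))
  (t : 'I_H) : R := \sum_(s < S) x s * D t s.

Definition unique_argmin (R : realType) (H S : nat) (x : 'I_S -> R) (D : 'M[R]_(H, S))
  (t : 'I_H) : Prop :=
  forall t' : 'I_H, t' != t -> agg_cost x D t < agg_cost x D t'.

Definition Bmat (R : realType) (H S : nat) (D : 'M[R]_(H, S)) (t : 'I_H) : 'M[R]_(H, S) :=
  ((const_mx 1 : 'cV[R]_H) *m (delta_mx 0 t : 'rV[R]_H) - 1%:M) *m D.

Definition Cmat (R : realType) (H S : nat) (D : 'M[R]_(H, S)) (t : 'I_H) : 'M[R]_(H + 1, S) :=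
  col_mx (Bmat D t) (const_mx 1).

(* Main.v *)
Require Import Defs.
From HB Require Import structures.
From mathcomp Require Import all_boot all_order all_algebra.
From mathcomp Require Import all_classical all_reals all_analysis.
From mathcomp Require Import ring lra.
Import Order.TTheory GRing.Theory Num.Theory.
Set Implicit Arguments. Unset Strict Implicit. Unset Printing Implicit Defensive.
Local Open Scope classical_set_scope.
Local Open Scope ring_scope.
Definition cube (R : realType) (H S : nat) (r : R) (M : 'M[R]_(H,S)) :=
  forall i j, `|M i j| <= r.
Definition mdist (R : realType) (H S : nat) (M M' : 'M[R]_(H,S)) : R :=
  \sum_i \sum_j `|M i j - M' i j|.
Definition Good (R : realType) (H S : nat) (f : 'M[R]_(H,S) -> R) :=
  forall r, exists B L, forall M M', cube r M -> cube r M' ->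
     `|f M| <= B /\ `|f M - f M'| <= L * mdist M M'.

Lemma mdist_ge0 (R : realType) (H S : nat) (M M' : 'M[R]_(H,S)) : 0 <= mdist M M'.
Proof. by apply: sumr_ge0 => i _; apply: sumr_ge0 => j _. Qed.

Lemma good_const (R : realType) (H S : nat) (c : R) : Good (fun _ : 'M[R]_(H,S) => c).
Proof. move=> r; exists `|c|, 0 => M M' _ _; by rewrite subrr normr0 mul0r. Qed.

Lemma good_coord (R : realType) (H S : nat) i j : Good (fun M : 'M[R]_(H,S) => M i j).
Proof.
move=> r; exists r, 1 => M M' hM _; split => //; rewrite mul1r /mdist.
rewrite (bigD1 i) //= (bigD1 j) //= -addrA ler_wpDr //.
apply: addr_ge0; first by apply: sumr_ge0.
by apply: sumr_ge0 => k _; apply: sumr_ge0.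
Qed.

Lemma good_add (R : realType) (H S : nat) (f g : 'M[R]_(H,S) -> R) :
  Good f -> Good g -> Good (fun M => f M + g M).
Proof.
move=> hf hg r; have [B1 [L1 h1]] := hf r; have [B2 [L2 h2]] := hg r.
exists (B1 + B2), (L1 + L2) => M M' hM hM'.
have [a1 b1] := h1 _ _ hM hM'; have [a2 b2] := h2 _ _ hM hM'.
split; first by apply: le_trans (ler_normD _ _) _; apply: lerD.
have -> : f M + g M - (f M' + g M') = (f M - f M') + (g M - g M') by ring.
apply: le_trans (ler_normD _ _) _; rewrite mulrDl; exact: lerD.
Qed.

Lemma good_opp (R : realType) (H S : nat) (f : 'M[R]_(H,S) -> R) :
  Good f -> Good (fun M => - f M).
Proof.
move=> hf r; have [B1 [L1 h1]] := hf r; exists B1, L1 => M M' hM hM'.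
have [a1 b1] := h1 _ _ hM hM'; rewrite normrN; split => //.
by rewrite -opprD normrN.
Qed.

Lemma good_mul (R : realType) (H S : nat) (f g : 'M[R]_(H,S) -> R) :
  Good f -> Good g -> Good (fun M => f M * g M).
Proof.
move=> hf hg r; have [B1 [L1 h1]] := hf r; have [B2 [L2 h2]] := hg r.
exists (`|B1| * `|B2|), (`|B1| * `|L2| + `|B2| * `|L1|) => M M' hM hM'.
have [a1 b1] := h1 _ _ hM hM'; have [a2 b2] := h2 _ _ hM hM'.
have [a1' _] := h1 _ _ hM' hM; have [a2' _] := h2 _ _ hM' hM.
have hd := mdist_ge0 M M'.
split; first by rewrite normrM; apply: ler_pM => //; apply: le_trans (ler_norm _).
have -> : f M * g M - f M' * g M' = f M * (g M - g M') + g M' * (f M - f M') by ring.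
apply: le_trans (ler_normD _ _) _; rewrite !normrM mulrDl -!mulrA; apply: lerD.
  apply: ler_pM => //; first exact: le_trans (ler_norm _).
  by apply: le_trans b2 _; apply: ler_wpM2r => //; apply: ler_norm.
apply: ler_pM => //; first exact: le_trans (ler_norm _).
by apply: le_trans b1 _; apply: ler_wpM2r => //; apply: ler_norm.
Qed.

Lemma good_sum (R : realType) (H S : nat) (I : Type) (s : seq I)
  (F : I -> 'M[R]_(H,S) -> R) :
  (forall i, Good (F i)) -> Good (fun M => \sum_(i <- s) F i M).
Proof.
move=> hF; elim: s => [|a s IH].
  under [X in Good X]funext => M do rewrite big_nil; exact: good_const.
under [X in Good X]funext => M do rewrite big_cons; exact: good_add.
Qed.

Lemma good_prod (R : realType) (H S : nat) (I : Type) (s : seq I)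
  (F : I -> 'M[R]_(H,S) -> R) :
  (forall i, Good (F i)) -> Good (fun M => \prod_(i <- s) F i M).
Proof.
move=> hF; elim: s => [|a s IH].
  under [X in Good X]funext => M do rewrite big_nil; exact: good_const.
under [X in Good X]funext => M do rewrite big_cons; exact: good_mul.
Qed.

Lemma good_det (R : realType) (H S n : nat) (A : 'M[R]_(H,S) -> 'M[R]_n) :
  (forall i j, Good (fun M => A M i j)) -> Good (fun M => \det (A M)).
Proof.
move=> hA; rewrite /determinant.
apply: good_sum => s; apply: good_mul; first exact: good_const.
by apply: good_prod => i; apply: hA.
Qed.
Definition setc (R : realType) (H S : nat) (y : 'I_H * 'I_S) (v : R) (M : 'M[R]_(H,S)) :
  'M[R]_(H,S) := \matrix_(i, j) if (i, j) == y then v else M i j.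

Lemma setcE (R : realType) (H S : nat) y v (M : 'M[R]_(H,S)) i j :
  setc y v M i j = if (i, j) == y then v else M i j.
Proof. by rewrite mxE. Qed.

Lemma setcC (R : realType) (H S : nat) y v w (M : 'M[R]_(H,S)) :
  setc y v (setc y w M) = setc y v M.
Proof. by apply/matrixP => i j; rewrite !setcE; case: eqP. Qed.

Lemma setc_id (R : realType) (H S : nat) y (M : 'M[R]_(H,S)) :
  setc y (M y.1 y.2) M = M.
Proof. by apply/matrixP => i j; rewrite !setcE; case: eqP => // <-. Qed.

Lemma good_setc (R : realType) (H S : nat) y v (f : 'M[R]_(H,S) -> R) :
  Good f -> Good (fun M => f (setc y v M)).
Proof.
move=> hf r; have [B [L h]] := hf (`|r| + `|v|).
have hc : forall M, cube r M -> cube (`|r| + `|v|) (setc y v M).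
  move=> M hM i j; rewrite setcE; case: ifP => _.
    by rewrite ler_wpDl.
  by apply: le_trans (hM i j) _; apply: le_trans (ler_norm r) _; rewrite ler_wpDr.
have hd : forall M M', mdist (setc y v M) (setc y v M') <= mdist M M'.
  move=> M M'; apply: ler_sum => i _; apply: ler_sum => j _; rewrite !setcE.
  by case: ifP => _ //; rewrite subrr normr0.
exists B, `|L| => M M' hM hM'; have [a b] := h _ _ (hc _ hM) (hc _ hM').
split => //; apply: le_trans b _; apply: le_trans (ler_wpM2r (mdist_ge0 _ _) (ler_norm L)) _.
by apply: ler_wpM2l => //.
Qed.
Lemma vol_ge0 (R : realType) (H S : nat) (a b : 'M[R]_(H,S)) :
  (forall i j, a i j <= b i j) -> 0 <= mx_box_vol a b.
Proof.
move=> h; apply: prodr_ge0 => i _; apply: prodr_ge0 => j _.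
by rewrite subr_ge0.
Qed.

Lemma null_fin (R : realType) (H S : nat) (y : 'I_H * 'I_S) (A : set 'M[R]_(H,S)) :
  (forall eps : R, 0 < eps -> exists (T : finType) (lo hi : T -> 'M[R]_(H,S)),
     [/\ forall c i j, lo c i j <= hi c i j,
         forall M, A M -> exists c, mx_box (lo c) (hi c) M &
      \sum_c mx_box_vol (lo c) (hi c) <= eps]) -> lebesgue_null A.
Proof.
move=> h eps he; have [T [lo [hi [hle hcov hsum]]]] := h eps he.
have [s hs] : {s : seq T | s = enum T} by exists (enum T).
pose g k := mx_box_vol (nth 0 (map lo s) k) (nth 0 (map hi s) k).
pose V c := mx_box_vol (lo c) (hi c).
have F1 : forall k, (size s <= k)%N -> g k = 0.
  move=> k hk.
  have e1 : nth 0 (map lo s) k = 0 by apply: nth_default; rewrite size_map.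
  have e2 : nth 0 (map hi s) k = 0 by apply: nth_default; rewrite size_map.
  rewrite /g e1 e2.
  by rewrite /mx_box_vol (bigD1 y.1) //= (bigD1 y.2) //= !mxE subrr !mul0r.
have F2 : forall k, (k < size s)%N -> g k = nth 0 (map V s) k.
  move=> k hk; have [x0 _] : exists x0 : T, true by move: hk; case: (s) => [|x r] // _; exists x.
  by rewrite /g !(nth_map x0).
have F3 : forall k, 0 <= g k.
  move=> k; case: (ltnP k (size s)) => hk; last by rewrite F1.
  have [x0 _] : exists x0 : T, true by move: hk; case: (s) => [|x r] // _; exists x.
  by rewrite F2 // (nth_map x0) //; apply: vol_ge0.
exists (fun k => nth 0 (map lo s) k), (fun k => nth 0 (map hi s) k).
split; [|split].
- move=> k i j; case: (ltnP k (size s)) => hk.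
    have [x0 _] : exists x0 : T, true by move: hk; case: (s) => [|x r] // _; exists x.
    by rewrite !(nth_map x0).
  have e1 : nth 0 (map lo s) k = 0 by apply: nth_default; rewrite size_map.
  have e2 : nth 0 (map hi s) k = 0 by apply: nth_default; rewrite size_map.
  by rewrite e1 e2 mxE.
- move=> M /hcov [c hc]; exists (index c s) => //.
  have hi0 : (index c s < size s)%N by rewrite index_mem hs mem_enum.
  by rewrite !(nth_map c) // nth_index ?hs ?mem_enum.
- move=> N; apply: le_trans hsum.
  have -> : \sum_(c : T) mx_box_vol (lo c) (hi c) = \sum_(0 <= k < size s) g k.
    rewrite -big_enum /= -hs.
    rewrite -(big_map V xpredT id) (big_nth 0) size_map.
    by apply: eq_big_nat => k /andP[_ hk]; rewrite F2.
  rewrite -(big_mkord xpredT g).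
  case: (leqP N (size s)) => hN.
    rewrite (@big_cat_nat _ _ _ N 0 (size s) _ _ (leq0n N) hN) /= lerDl.
    by apply: sumr_ge0 => k _.
  rewrite (@big_cat_nat _ _ _ (size s) 0 N _ _ (leq0n _) (ltnW hN)) /=.
  rewrite [X in _ + X]big1_seq ?addr0 // => k /andP[_].
  by rewrite mem_index_iota => /andP[hk _]; rewrite F1.
Qed.
Lemma cell_ex (R : realType) (c w u : R) (m : nat) : 0 <= w -> c <= u ->
  u <= c + m.+1%:R * w ->
  exists a : nat, (a <= m)%N /\ c + a%:R * w <= u /\ u <= c + a.+1%:R * w.
Proof.
move=> hw h1; elim: m => [|m IH] h2.
  by exists 0%N; rewrite mul0r addr0.
case: (lerP u (c + m.+1%:R * w)) => hu.
  by have [a [ha hb]] := IH hu; exists a; split => //; apply: leqW.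
by exists m.+1; split => //; split => //; apply: ltW.
Qed.

Lemma prod_scale (R : comPzRingType) (H S : nat) (y : 'I_H * 'I_S) (a : R)
  (b : 'I_H -> 'I_S -> R) :
  \prod_i \prod_j (if (i, j) == y then a else b i j) =
  a * \prod_i \prod_j (if (i, j) == y then 1 else b i j).
Proof.
case: y => i0 j0.
rewrite (bigD1 i0) //= [in RHS](bigD1 i0) //=.
rewrite (bigD1 j0) //= [X in _ = _ * (X * _)](bigD1 j0) //= !eqxx mul1r.
have e1 : \prod_(j < S | j != j0) (if (i0, j) == (i0, j0) then a else b i0 j) =
          \prod_(j < S | j != j0) (if (i0, j) == (i0, j0) then 1 else b i0 j).
  by apply: eq_bigr => j hj; rewrite xpair_eqE eqxx (negbTE hj).
have e2 : \prod_(i < H | i != i0) \prod_j (if (i, j) == (i0, j0) then a else b i j) =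
          \prod_(i < H | i != i0) \prod_j (if (i, j) == (i0, j0) then 1 else b i j).
  by apply: eq_bigr => i hi; apply: eq_bigr => j _; rewrite xpair_eqE (negbTE hi).
by rewrite e1 e2 !mulrA.
Qed.
Lemma graph_null (R : realType) (H S : nat) (y : 'I_H * 'I_S) (n L : R)
  (K : set 'M[R]_(H,S)) (g : 'M[R]_(H,S) -> R) :
  0 <= n -> (forall M, K M -> cube n M) ->
  (forall M M', K M -> K M' ->
     `|g M - g M'| <= L * mdist (setc y 0 M) (setc y 0 M')) ->
  lebesgue_null [set M | K M /\ M y.1 y.2 = g M].
Proof.
move=> hn hK hL; apply: (null_fin y) => eps he.
pose Q := \prod_(i < H) \prod_(j < S) (if (i, j) == y then 1 else 2 * n).
have hQ : 0 <= Q.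
  apply: prodr_ge0 => i _; apply: prodr_ge0 => j _; case: ifP => _ //.
  by apply: mulr_ge0.
pose dl := eps / (2 * (Q + 1)).
have hdl : 0 < dl by apply: divr_gt0 => //; apply: mulr_gt0 => //; apply: ltr_wpDl.
pose X := `|L| * (S * H)%:R * (2 * n) / dl.
have hX : 0 <= X.
  apply: divr_ge0; last exact: ltW.
  by apply: mulr_ge0; [apply: mulr_ge0 | apply: mulr_ge0].
pose m' := Num.Def.archi_bound X.
have hm' : X < m'%:R := archi_boundP hX.
pose m := m'.+1.
have hm0 : (0 : R) < m%:R by rewrite ltr0n.
pose w := 2 * n / m%:R.
have hw : 0 <= w by apply: divr_ge0; [apply: mulr_ge0 | apply: ltW].
have hmw : m%:R * w = 2 * n by rewrite /w mulrCA mulfV ?mulr1 // gt_eqF.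
pose lo (a : 'I_m) := - n + (a : nat)%:R * w.
pose hi (a : 'I_m) := - n + (a : nat).+1%:R * w.
have hlohi : forall a, lo a <= hi a.
  by move=> a; rewrite /lo /hi lerD2l ler_wpM2r // ler_nat.
have hcell : forall u, `|u| <= n -> exists a : 'I_m, lo a <= u /\ u <= hi a.
  move=> u; rewrite ler_norml => /andP[h1 h2].
  have h3 : u <= - n + m'.+1%:R * w by rewrite hmw; lra.
  have [a [ha [hb hc]]] := cell_ex hw h1 h3.
  by exists (Ordinal (ha : (a < m)%N)).
pose T := {ffun 'I_H -> {ffun 'I_S -> 'I_m}}.
pose inCell (c : T) (M : 'M[R]_(H,S)) :=
  forall i j, (i, j) != y -> lo (c i j) <= M i j /\ M i j <= hi (c i j).
have hdist : forall c M M', inCell c M -> inCell c M' ->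
    mdist (setc y 0 M) (setc y 0 M') <= (S * H)%:R * w.
  move=> c M M' h1 h2.
  have -> : (S * H)%:R * w = \sum_(i < H) \sum_(j < S) w.
    by rewrite !sumr_const !card_ord -mulrnA mulr_natl mulnC.
  apply: ler_sum => i _; apply: ler_sum => j _; rewrite !setcE.
  case: ifPn => hy; first by rewrite subrr normr0.
  have [a1 b1] := h1 i j hy; have [a2 b2] := h2 i j hy.
  have : hi (c i j) - lo (c i j) = w by rewrite /hi /lo -natr1; ring.
  rewrite ler_norml; move=> e; apply/andP; split; lra.
have hv : forall c : T, exists v : R, forall M, K M -> inCell c M -> `|g M - v| <= dl.
  move=> c; case: (pselect (exists M, K M /\ inCell c M)) => [[M0 [hK0 hc0]]|hno].
    exists (g M0) => M hKM hcM; apply: le_trans (hL _ _ hKM hK0) _.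
    apply: le_trans (ler_wpM2r (mdist_ge0 _ _) (ler_norm L)) _.
    apply: le_trans (ler_wpM2l (normr_ge0 L) (hdist _ _ _ hcM hc0)) _.
    have : X <= m%:R by apply: ltW; apply: (lt_le_trans hm'); rewrite ler_nat /m leqnSn.
    rewrite /X ler_pdivrMr // => hh.
    rewrite /w !mulrA ler_pdivrMr // [X in _ <= X]mulrC.
    by move: hh; rewrite !mulrA.
  by exists 0 => M hKM hcM; case: hno; exists M.
have [vf hvf] := choice hv.
pose lob (c : T) : 'M[R]_(H,S) := \matrix_(i, j)
  if (i, j) == y then (if c i j == ord0 then vf c - dl else vf c) else lo (c i j).
pose hib (c : T) : 'M[R]_(H,S) := \matrix_(i, j)
  if (i, j) == y then (if c i j == ord0 then vf c + dl else vf c) else hi (c i j).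
pose W (i : 'I_H) (j : 'I_S) (a : 'I_m) :=
  if (i, j) == y then (if a == ord0 then 2 * dl else 0) else w.
exists T, lob, hib; split.
- move=> c i j; rewrite !mxE; case: ifP => _; last exact: hlohi.
  case: ifP => _ //; lra.
- move=> M [hKM hgM].
  have hc : forall i j, exists a : 'I_m,
      if (i, j) == y then a = ord0 else lo a <= M i j /\ M i j <= hi a.
    move=> i j; case: (boolP ((i, j) == y)) => hy.
      by exists ord0.
    exact: hcell (hK _ hKM i j).
  have hc' : forall i, exists f : 'I_S -> 'I_m, forall j,
      if (i, j) == y then f j = ord0 else lo (f j) <= M i j /\ M i j <= hi (f j).
    by move=> i; have [f hf] := choice (hc i); exists f.
  have [F hF] := choice hc'.
  pose c : T := [ffun i => [ffun j => F i j]].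
  have hcM : inCell c M.
    move=> i j hy; have := hF i j; rewrite /c !ffunE (negbTE hy).
    done.
  exists c => i j; rewrite !mxE; case: ifPn => hy.
    have hy' : ((i, j) == y) = true := hy.
    have := hF i j; rewrite hy' /c !ffunE => ->; rewrite eqxx.
    have := hvf c M hKM hcM; move/eqP: hy => hy.
    have -> : M i j = g M by rewrite -hgM -hy.
    by rewrite ler_distl => /andP[h1 h2]; split; lra.
  exact: hcM.
- have -> : \sum_c mx_box_vol (lob c) (hib c) =
            \sum_(c : T) \prod_i \prod_j W i j (c i j).
    apply: eq_bigr => c _; apply: eq_bigr => i _; apply: eq_bigr => j _.
    rewrite !mxE /W; case: ifP => _; last by rewrite /hi /lo -natr1; ring.
    by case: ifP => _; ring.
  have -> : \sum_(c : T) \prod_i \prod_j W i j (c i j) =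
            \prod_i \sum_(r : {ffun 'I_S -> 'I_m}) \prod_j W i j (r j).
    by rewrite [RHS]bigA_distr_bigA.
  have -> : \prod_i \sum_(r : {ffun 'I_S -> 'I_m}) \prod_j W i j (r j) =
            \prod_i \prod_j (if (i, j) == y then 2 * dl else 2 * n).
    apply: eq_bigr => i _.
    transitivity (\prod_j \sum_a W i j a); first by rewrite [RHS]bigA_distr_bigA.
    apply: eq_bigr => j _.
    rewrite /W; case: ifP => _.
      rewrite (bigD1 ord0) //= ?eqxx big1 ?addr0 // => a /negbTE -> //.
    by rewrite sumr_const card_ord -hmw mulr_natl.
  rewrite (prod_scale y (2 * dl) (fun _ _ => 2 * n)) -/Q /dl.
  have hQ1 : 0 < Q + 1 by lra.
  have -> : 2 * (eps / (2 * (Q + 1))) * Q = eps * (Q / (Q + 1)).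
    by field; rewrite gt_eqF.
  rewrite -[X in _ <= X]mulr1; apply: ler_wpM2l; [exact: ltW | rewrite ler_pdivrMr // mul1r; lra].
Qed.
Lemma norm_le_mdist0 (R : realType) (H S : nat) (M : 'M[R]_(H,S)) i j :
  `|M i j| <= \sum_i \sum_j `|M i j|.
Proof.
rewrite (bigD1 i) //= (bigD1 j) //= -addrA ler_wpDr //.
apply: addr_ge0; first by apply: sumr_ge0.
by apply: sumr_ge0 => k _; apply: sumr_ge0.
Qed.

Lemma affine_neg (R : realType) (H S : nat) (y : 'I_H * 'I_S)
  (Neg : set 'M[R]_(H,S) -> Prop)
  (NS : forall A B, A `<=` B -> Neg B -> Neg A)
  (NU : forall A B, Neg A -> Neg B -> Neg (A `|` B))
  (NC : forall F : nat -> set 'M[R]_(H,S), (forall k, Neg (F k)) -> Neg (\bigcup_k F k))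
  (NL : forall A, lebesgue_null A -> Neg A)
  (f al be : 'M[R]_(H,S) -> R) :
  Good al -> Good be ->
  (forall M v, al (setc y v M) = al M) -> (forall M v, be (setc y v M) = be M) ->
  (forall M, f M = al M * M y.1 y.2 + be M) ->
  Neg [set M | al M = 0] -> Neg [set M | f M = 0].
Proof.
move=> ga gb ia ib hf h0.
pose K (k : nat) := [set M : 'M[R]_(H,S) | cube k%:R M /\ k.+1%:R^-1 <= `|al M|].
pose g M := - be M / al M.
pose G (k : nat) := [set M | K k M /\ M y.1 y.2 = g M].
apply: (NS _ ([set M | al M = 0] `|` \bigcup_k G k)); last first.
  apply: NU => //; apply: NC => k; apply: NL.
  have [Ba [La ha]] := ga k%:R; have [Bb [Lb hb]] := gb k%:R.
  apply: (graph_null (n := k%:R) (L := k.+1%:R ^+ 2 * (`|Ba| * `|Lb| + `|Bb| * `|La|))).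
  - by [].
  - by move=> M [].
  move=> M M' [hM haM] [hM' haM'].
  have c0 : forall M : 'M[R]_(H,S), cube k%:R M -> cube k%:R (setc y 0 M).
    by move=> N hN i j; rewrite setcE; case: ifP => // _; rewrite normr0.
  have [a1 b1] := ha _ _ (c0 _ hM) (c0 _ hM').
  have [a2 b2] := hb _ _ (c0 _ hM) (c0 _ hM').
  have [a3 _] := hb _ _ (c0 _ hM') (c0 _ hM).
  rewrite !ia !ib in a1 b1 a2 b2 a3.
  set d := mdist _ _ in b1 b2 *.
  have hd : 0 <= d := mdist_ge0 _ _.
  have hk : (0 : R) < k.+1%:R^-1 by rewrite invr_gt0 ltr0n.
  have nz : forall N, k.+1%:R^-1 <= `|al N| -> al N != 0.
    by move=> N hN; rewrite -normr_gt0; apply: lt_le_trans hN.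
  have iv : forall N, k.+1%:R^-1 <= `|al N| -> `|(al N)^-1| <= k.+1%:R.
    move=> N hN; rewrite normfV -[X in _ <= X]invrK lef_pV2 //;
      by rewrite posrE ?normr_gt0 ?nz.
  have e : g M - g M' = ((be M' - be M) * al M + be M * (al M - al M')) *
                         ((al M)^-1 * (al M')^-1).
    by rewrite /g; field; rewrite !nz.
  rewrite e normrM.
  have h1 : `|(be M' - be M) * al M + be M * (al M - al M')| <=
            (`|Ba| * `|Lb| + `|Bb| * `|La|) * d.
    apply: le_trans (ler_normD _ _) _; rewrite !normrM mulrDl; apply: lerD.
      rewrite mulrC -mulrA; apply: ler_pM => //.
        by apply: le_trans (ler_norm _).
      rewrite distrC; apply: le_trans b2 _; apply: ler_wpM2r => //; exact: ler_norm.
    rewrite -mulrA; apply: ler_pM => //.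
      by apply: le_trans (ler_norm _).
    apply: le_trans b1 _; apply: ler_wpM2r => //; exact: ler_norm.
  have h2 : `|(al M)^-1 * (al M')^-1| <= k.+1%:R ^+ 2.
    by rewrite normrM expr2; apply: ler_pM => //; apply: iv.
  have -> : k.+1%:R ^+ 2 * (`|Ba| * `|Lb| + `|Bb| * `|La|) * d =
            ((`|Ba| * `|Lb| + `|Bb| * `|La|) * d) * k.+1%:R ^+ 2 by ring.
  by apply: ler_pM.
move=> M /= hfM; case: (eqVneq (al M) 0) => ha; [by left | right].
pose X := \sum_i \sum_j `|M i j| + `|al M|^-1.
have hX : 0 <= X.
  apply: addr_ge0; last by rewrite invr_ge0.
  by apply: sumr_ge0 => i _; apply: sumr_ge0.
pose k := Num.Def.archi_bound X.
have hk : X < k%:R := archi_boundP hX.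
exists k => //; split; [split|].
- move=> i j; apply: le_trans (norm_le_mdist0 M i j) _.
  apply: ltW; apply: le_lt_trans hk; rewrite /X lerDl invr_ge0 //.
- rewrite invf_ple ?posrE ?ltr0n ?normr_gt0 //.
  have hX1 : X < k.+1%:R by apply: lt_le_trans hk _; rewrite ler_nat.
  apply: ltW; apply: le_lt_trans hX1.
  by rewrite /X lerDr; apply: sumr_ge0 => i _; apply: sumr_ge0.
- rewrite /g; move: hfM; rewrite hf => e.
  have eb : be M = - (al M * M y.1 y.2).
    by apply/eqP; rewrite -subr_eq0 opprK addrC e.
  by rewrite eb opprK mulrAC mulfV // mul1r.
Qed.
Definition sel (H' : nat) (t : 'I_H'.+1) (l : nat) : 'I_H'.+1 := inord (bump t l).

Lemma sel_val (H' : nat) (t : 'I_H'.+1) l : (l < H')%N -> (sel t l : nat) = bump t l.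
Proof.
move=> hl; rewrite /sel inordK // /bump; case: (t <= l)%N => /=; rewrite ?add1n ?add0n //.
exact: leqW.
Qed.

Lemma sel_neq_t (H' : nat) (t : 'I_H'.+1) l : (l < H')%N -> sel t l != t.
Proof.
move=> hl; apply/negP => /eqP/(congr1 val) /=; rewrite sel_val // => e.
by move: (neq_bump t l); rewrite e eqxx.
Qed.

Lemma sel_inj (H' : nat) (t : 'I_H'.+1) l1 l2 : (l1 < H')%N -> (l2 < H')%N ->
  sel t l1 = sel t l2 -> l1 = l2.
Proof.
move=> h1 h2 /(congr1 val); rewrite /= !sel_val //; exact: (can_inj (bumpK t)).
Qed.

Definition Dmx (R : realType) (H' S' : nat) (t : 'I_H'.+1) (k : nat)
  (M : 'M[R]_(H'.+1, S'.+1)) : 'M[R]_k.+1 :=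
  \matrix_(a, b) if (a : nat) == 0%N then 1 else M t (inord b) - M (sel t (a : nat).-1) (inord b).

Definition Delta (R : realType) (H' S' : nat) (t : 'I_H'.+1) (k : nat)
  (M : 'M[R]_(H'.+1, S'.+1)) : R := \det (Dmx t k M).

Lemma good_Delta (R : realType) (H' S' : nat) (t : 'I_H'.+1) k :
  Good (fun M : 'M[R]_(H'.+1, S'.+1) => Delta t k M).
Proof.
apply: good_det => a b.
have -> : (fun M : 'M[R]_(H'.+1, S'.+1) => Dmx t k M a b) =
          (fun M => if (a : nat) == 0%N then 1 else M t (inord b) - M (sel t (a : nat).-1) (inord b)).
  by apply: funext => M; rewrite mxE.
case: eqP => _; first exact: good_const.
by apply: good_add; [apply: good_coord | apply: good_opp; apply: good_coord].
Qed.

Lemma Delta_indep (R : realType) (H' S' : nat) (t : 'I_H'.+1) k c v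
  (M : 'M[R]_(H'.+1, S'.+1)) : (k < H')%N ->
  Delta t k (setc (sel t k, c) v M) = Delta t k M.
Proof.
move=> hk; rewrite /Delta; congr (\det _); apply/matrixP => a b; rewrite !mxE.
case: ifP => // ha; rewrite !xpair_eqE.
rewrite eq_sym (negbTE (sel_neq_t t hk)) /=.
have ha' : ((a : nat).-1 < k)%N.
  by move: (ltn_ord a) ha; case: (a : nat) => [|a'] //= ? _.
have -> : (sel t (a : nat).-1 == sel t k) = false.
  have hk' : ((a : nat).-1 < H')%N := ltn_trans ha' hk.
  by apply/negP => /eqP /(sel_inj hk' hk) e; rewrite e ltnn in ha'.
by [].
Qed.

Lemma Delta0 (R : realType) (H' S' : nat) (t : 'I_H'.+1) (M : 'M[R]_(H'.+1, S'.+1)) :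
  Delta t 0 M = 1.
Proof. by rewrite /Delta det_mx11 mxE. Qed.
Lemma Delta_exp (R : realType) (H' S' : nat) (t : 'I_H'.+1) k
  (M : 'M[R]_(H'.+1, S'.+1)) : (k < H')%N -> (k.+1 <= S')%N ->
  Delta t k.+1 M = - Delta t k M * M (sel t k) (inord k.+1) +
                   Delta t k.+1 (setc (sel t k, inord k.+1) 0 M).
Proof.
move=> hk hkS.
set y : 'I_H'.+1 * 'I_S'.+1 := (sel t k, inord k.+1).
set M0 := setc y 0 M.
have ht : (t == sel t k) = false by rewrite eq_sym; apply/negbTE/sel_neq_t.
have hrow : forall (a : 'I_k.+2) b, (a <= k)%N -> Dmx t k.+1 M0 a b = Dmx t k.+1 M a b.
  move=> a b ha; rewrite !mxE; case: eqP => // /eqP ha0; rewrite !xpair_eqE.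
  rewrite ht /=.
  have ha' : ((a : nat).-1 < k)%N by move: ha ha0; case: (a : nat).
  have hk' : ((a : nat).-1 < H')%N := ltn_trans ha' hk.
  have -> : (sel t (a : nat).-1 == sel t k) = false.
    by apply/negP => /eqP /(sel_inj hk' hk) e; rewrite e ltnn in ha'.
  by [].
have hcof : forall j, cofactor (Dmx t k.+1 M0) ord_max j = cofactor (Dmx t k.+1 M) ord_max j.
  move=> j; rewrite /cofactor; congr (_ * \det _); apply/matrixP => a b.
  rewrite [LHS]mxE [LHS]mxE [RHS]mxE [RHS]mxE.
  by apply: hrow; rewrite lift_max -ltnS.
rewrite /Delta (expand_det_row (Dmx t k.+1 M) ord_max).
rewrite (expand_det_row (Dmx t k.+1 M0) ord_max).
under [X in _ = _ + X]eq_bigr => j _ do rewrite hcof.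
have hC : cofactor (Dmx t k.+1 M) ord_max ord_max = \det (Dmx t k M).
  rewrite /cofactor exprD -expr2 sqrr_sign mul1r; congr (\det _).
  by apply/matrixP => a b; rewrite !mxE !lift_max.
have hinj : forall j : 'I_k.+2, (inord j == inord k.+1 :> 'I_S'.+1) = (j == ord_max).
  move=> j; apply/eqP/eqP => [e|->] //.
  apply: val_inj => /=; move/(congr1 (@nat_of_ord _)): e.
  have hj : (j <= S')%N by apply: leq_trans hkS; rewrite -ltnS.
  by rewrite !inordK.
have hd : forall j, Dmx t k.+1 M ord_max j - Dmx t k.+1 M0 ord_max j =
                    if j == ord_max then - M (sel t k) (inord k.+1) else 0.
  move=> j; rewrite !mxE.
  have -> : (((ord_max : 'I_k.+2) : nat) == 0%N) = false by [].
  have -> : ((ord_max : 'I_k.+2) : nat).-1 = k by [].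
  rewrite /y !xpair_eqE ht eqxx andFb andTb hinj.
  case: eqP => [->|_].
    have -> : (inord (ord_max : 'I_k.+2) : 'I_S'.+1) = inord k.+1 by [].
    by rewrite subr0 addrAC subrr add0r.
  by rewrite subrr.
have -> : \sum_j Dmx t k.+1 M ord_max j * cofactor (Dmx t k.+1 M) ord_max j =
   \sum_j (Dmx t k.+1 M ord_max j - Dmx t k.+1 M0 ord_max j) * cofactor (Dmx t k.+1 M) ord_max j
   + \sum_j Dmx t k.+1 M0 ord_max j * cofactor (Dmx t k.+1 M) ord_max j.
  have e : forall a b c : R, a * c = (a - b) * c + b * c by move=> a b c; rewrite -mulrDl subrK.
  by rewrite -big_split; apply: eq_bigr => j _; apply: e.
have e2 : forall a b : R, - a * b + 0 = - b * a.
  by move=> a b; rewrite addr0 !mulNr mulrC.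
congr (_ + _); rewrite (bigD1 ord_max) // big1.
  by rewrite hd eqxx hC; apply: e2.
by move=> j /andP[_ /negbTE hj]; rewrite hd hj mul0r.
Qed.
Definition NegOK (R : realType) (H S : nat) (Neg : set 'M[R]_(H,S) -> Prop) :=
  [/\ (forall A B, A `<=` B -> Neg B -> Neg A),
      (forall A B, Neg A -> Neg B -> Neg (A `|` B)),
      (forall F : nat -> set 'M[R]_(H,S), (forall k, Neg (F k)) -> Neg (\bigcup_k F k)),
      (forall A, lebesgue_null A -> Neg A) & Neg set0].

Lemma Delta_null (R : realType) (H' S' : nat) (Neg : set 'M[R]_(H'.+1,S'.+1) -> Prop)
  (hN : NegOK Neg) (t : 'I_H'.+1) : (S' <= H')%N ->
  forall k, (k <= S')%N -> Neg [set M | Delta t k M = 0].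
Proof.
case: hN => NS NU NC NL N0 hSH; elim => [|k IH] hk.
  by apply: NS N0 => M /=; rewrite Delta0 => /eqP; rewrite oner_eq0.
have hkH : (k < H')%N by apply: leq_trans hk hSH.
apply: (affine_neg (y := (sel t k, inord k.+1)) NS NU NC NL
  (al := fun M => - Delta t k M)
  (be := fun M => Delta t k.+1 (setc (sel t k, inord k.+1) 0 M))).
- by apply: good_opp; apply: good_Delta.
- by apply: good_setc; apply: good_Delta.
- by move=> M v; rewrite Delta_indep.
- by move=> M v; rewrite setcC.
- by move=> M; rewrite Delta_exp.
- apply: NS (IH (ltnW hk)) => M /= /eqP; rewrite oppr_eq0 => /eqP //.
Qed.

Lemma ties_null (R : realType) (H S' : nat) (Neg : set 'M[R]_(H,S'.+1) -> Prop)
  (hN : NegOK Neg) (x : 'I_S'.+1 -> R) (t t' : 'I_H) :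
  0 < x ord0 -> t != t' -> Neg [set M | agg_cost x M t = agg_cost x M t'].
Proof.
case: hN => NS NU NC NL N0 hx htt.
pose f (M : 'M[R]_(H,S'.+1)) := agg_cost x M t - agg_cost x M t'.
pose y := (t, ord0 : 'I_S'.+1).
have gf : Good f.
  rewrite /f /agg_cost; apply: good_add;
    [apply: (@good_sum _ _ _ _ _ (fun s M => x s * M t s)) |
     apply: good_opp; apply: (@good_sum _ _ _ _ _ (fun s M => x s * M t' s))] => s;
    (apply: good_mul; [exact: good_const | exact: good_coord]).
apply: (NS _ [set M | f M = 0]).
  by move=> M /= e; rewrite /f e subrr.
apply: (affine_neg (y := y) NS NU NC NL (al := fun _ => x ord0)
  (be := fun M => f (setc y 0 M))).
- exact: good_const.
- exact: good_setc.
- by [].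
- by move=> M v; rewrite setcC.
- move=> M.
  have e1 : agg_cost x M t = x ord0 * M t ord0 + agg_cost x (setc y 0 M) t.
    rewrite /agg_cost !big_ord_recl setcE eqxx mulr0 add0r; congr (_ + _).
    by apply: eq_bigr => s _; rewrite setcE xpair_eqE eqxx andTb.
  have e2 : agg_cost x (setc y 0 M) t' = agg_cost x M t'.
    apply: eq_bigr => s _; rewrite setcE xpair_eqE.
    by rewrite eq_sym (negbTE htt).
  by rewrite /f e2 {1}e1 addrA.
- by apply: NS N0 => M /= e; move: hx; rewrite e ltxx.
Qed.

Lemma neg_fin (R : realType) (H S : nat) (Neg : set 'M[R]_(H,S) -> Prop)
  (hN : NegOK Neg) (T : finType) (F : T -> set 'M[R]_(H,S)) :
  (forall i, Neg (F i)) -> Neg [set M | exists i, F i M].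
Proof.
case: hN => NS NU NC NL N0 hF.
suff : forall s : seq T, Neg [set M | exists2 i, i \in s & F i M].
  by move=> /(_ (enum T)); apply: NS => M [i h]; exists i; rewrite ?mem_enum.
elim => [|a s IH].
  by apply: NS N0 => M [i]; rewrite in_nil.
apply: NS (NU _ _ (hF a) IH) => M [i]; rewrite in_cons => /orP [/eqP -> h | hi h].
  by left.
by right; exists i.
Qed.

Lemma Bmat_entry (R : realType) (H S : nat) (M : 'M[R]_(H,S)) t i b :
  Bmat M t i b = M t b - M i b.
Proof.
by rewrite /Bmat mulmxBl mul1mx -mulmxA -rowE !mxE big_ord1 !mxE mul1r.
Qed.

Lemma rank_C (R : realType) (H' S' : nat) (t : 'I_H'.+1) (M : 'M[R]_(H'.+1, S'.+1)) :
  Delta t S' M != 0 -> \rank (Cmat M t) = S'.+1.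
Proof.
move=> hD.
pose f (a : 'I_S'.+1) : 'I_(H'.+1 + 1) :=
  if (a : nat) == 0%N then rshift _ (ord0 : 'I_1) else lshift 1 (sel t (a : nat).-1).
have e : Dmx t S' M = rowsub f (Cmat M t).
  apply/matrixP => a b; rewrite [LHS]mxE [RHS]mxE /Cmat /f.
  case: eqP => _; first by rewrite col_mxEd mxE.
  by rewrite col_mxEu Bmat_entry inord_val.
have hu : Dmx t S' M \in unitmx by rewrite unitmxE unitfE.
apply/eqP; rewrite eqn_leq rank_leq_col /=.
rewrite -{1}(mxrank_unit hu) e rowsubE; exact: mxrankM_maxr.
Qed.
Theorem theorem3 (R : realType) (d : measure_display) (Omega : measurableType d)
  (P : probability Omega R) (H S : nat) (D : Omega -> 'M[R]_(H, S))
  (x : 'I_S -> R) :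
  (1 <= S)%N -> (S <= H)%N ->
  (forall i j, measurable_fun setT (fun w => D w i j)) ->
  {ae P, forall w, forall i j, 0 <= D w i j} ->
  (forall A : set 'M[R]_(H, S), lebesgue_null A -> P.-negligible (D @^-1` A)) ->
  (forall s, 0 < x s) -> \sum_(s < S) x s = 1 ->
  {ae P, forall w, exists t : 'I_H,
      unique_argmin x (D w) t /\ \rank (Cmat (D w) t) = S}.
Proof.
move=> hS hSH hmeas hpos hnull hx hsum.
case: S hS hSH x D hmeas hpos hnull hx hsum => [//|S'] _.
case: H => [//|H'] hSH x D hmeas hpos hnull hx hsum.
pose Neg (A : set 'M[R]_(H'.+1, S'.+1)) := P.-negligible (D @^-1` A).
have hN : NegOK Neg.
  split.
  - by move=> A B hAB hB; apply: negligibleS hB => w /=; apply: hAB.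
  - by move=> A B hA hB; rewrite /Neg preimage_setU; apply: negligibleU.
  - by move=> F hF; rewrite /Neg preimage_bigcup; apply: negligible_bigcup.
  - exact: hnull.
  - by rewrite /Neg preimage_set0; apply: negligible_set0.
have hSH' : (S' <= H')%N by [].
pose Bad := [set M : 'M[R]_(H'.+1, S'.+1) |
   ~ exists t, unique_argmin x M t /\ \rank (Cmat M t) = S'.+1].
have hBad : Neg Bad.
  have [NS NU NC NL N0] := hN.
  apply: (NS _ ([set M | exists p : 'I_H'.+1 * 'I_H'.+1,
      p.1 != p.2 /\ agg_cost x M p.1 = agg_cost x M p.2] `|`
      [set M | exists t : 'I_H'.+1, Delta t S' M = 0])).
    move=> M /= hM.
    case: (pselect (exists p : 'I_H'.+1 * 'I_H'.+1,
      p.1 != p.2 /\ agg_cost x M p.1 = agg_cost x M p.2)) => [h|hno]; first by left.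
    right.
    have [t _ hmin] := @arg_minP _ _ _ (ord0 : 'I_H'.+1) xpredT (fun i => agg_cost x M i) isT.
    have hu : unique_argmin x M t.
      move=> t' ht'; have := hmin t' isT; rewrite le_eqVlt => /orP [/eqP e|//].
      by exfalso; apply: hno; exists (t, t'); split => //=; rewrite eq_sym.
    exists t; case: (eqVneq (Delta t S' M) 0) => // hD.
    by exfalso; apply: hM; exists t; split => //; apply: rank_C.
  apply: NU.
    apply: (neg_fin hN (F := fun p : 'I_H'.+1 * 'I_H'.+1 => [set M |
       p.1 != p.2 /\ agg_cost x M p.1 = agg_cost x M p.2])) => -[t t'] /=.
    case: (eqVneq t t') => [->|htt].
      by apply: NS N0 => M /= [/eqP].
    by apply: NS (ties_null hN (hx ord0) htt) => M /= [].
  apply: (neg_fin hN (F := fun t => [set M | Delta t S' M = 0])) => t.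
  exact: Delta_null.
apply: negligibleS hBad => w /= hw; exact: hw.
Qed.
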